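(* Let $(X, \|\cdot\|)$ be a real reflexive Banach space. Let $(\|\cdot\|_n)_{n \in \mathbb{N}}$ be a sequence of strictly convex norms on $X$ for which there is a sequence $(s_n)$ of non-negative numbers with $s_n \to 0$ such that for all $n \in \mathbb{N}$ and $x \in X$ $$(1-s_n)\|x\|_n \le \|x\| \le (1+s_n)\|x\|_n.$$ Let $\{F_k\}_{k \in \mathbb{N}}$ be a countable family of convex sets such that for all $k, n \in \mathbb{N}$ the set $F_k$ is a contractive set with respect to $\|\cdot\|_n$. Assume $F = \bigcap_{k \in \mathbb{N}} F_k \neq \emptyset$. Then $F$ is a contractive subset of $X$ with respect to $\|\cdot\|$.
   Context: Given a norm $|\cdot|$ on $X$, a non-empty set $D \subset X$ is contractive with respect to $|\cdot|$ if there exists a mapping $P : X \to D$ with $P|_D = \mathrm{id}_D$ and $|Px - Py| \le |x-y|$ for all $x,y \in X$. *)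

(* Defs.v *)
From HB Require Import structures.
From mathcomp Require Import all_boot all_order all_algebra.
From mathcomp Require Import all_classical all_reals all_analysis.
Set Implicit Arguments. Unset Strict Implicit. Unset Printing Implicit Defensive.
Import Order.TTheory GRing.Theory Num.Theory.
Import numFieldNormedType.Exports.
Local Open Scope classical_set_scope.
Local Open Scope ring_scope.

Definition is_norm (R : realType) (X : lmodType R) (N : X -> R) : Prop :=
  [/\ forall x, 0 <= N x,
      forall x, N x = 0 -> x = 0,
      forall (a : R) x, N (a *: x) = `|a| * N x
    & forall x y, N (x + y) <= N x + N y].

Definition strictly_convex_norm (R : realType) (X : lmodType R) (N : X -> R)
  : Prop :=
  forall x y, N x = 1 -> N y = 1 -> x <> y -> N (2^-1 *: (x + y)) < 1.

Definition contractive (R : realType) (X : lmodType R) (N : X -> R)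
  (D : set X) : Prop :=
  D !=set0 /\
  exists P : X -> X,
    [/\ forall x, D (P x),
        forall x, D x -> P x = x
      & forall x y, N (P x - P y) <= N (x - y)].

(* Topological dual and reflexivity, unfolded without a library dual space:
   X is reflexive iff every bounded linear functional Phi on the space of
   continuous linear functionals of X is an evaluation at some x in X.
   A continuous linear functional f has operator norm <= M iff
   |f x| <= M ||x|| for all x; Phi is bounded iff |Phi f| <= C ||f||_op. *)
Definition cont_linear_functional (R : realType) (X : normedModType R)
  (f : X -> R) : Prop :=
  [/\ forall x y, f (x + y) = f x + f y,
      forall (a : R) x, f (a *: x) = a * f x
    & continuous f].

Definition reflexive_space (R : realType) (X : normedModType R) : Prop :=
  forall Phi : (X -> R) -> R,
    (forall f g, cont_linear_functional f -> cont_linear_functional g ->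
       Phi (f \+ g) = Phi f + Phi g) ->
    (forall (a : R) f, cont_linear_functional f ->
       Phi (fun x => a * f x) = a * Phi f) ->
    (exists C : R, forall f (M : R), cont_linear_functional f ->
       (forall x, `|f x| <= M * `|x|) -> `|Phi f| <= C * M) ->
    exists x : X, forall f, cont_linear_functional f -> Phi f = f x.

(* Main.v *)
Require Import Defs.
From HB Require Import structures.
From mathcomp Require Import all_boot all_order all_algebra.
From mathcomp Require Import all_classical all_reals all_analysis.
From mathcomp Require Import ring lra.
Import Order.TTheory GRing.Theory Num.Theory.
Import numFieldNormedType.Exports.
Local Open Scope classical_set_scope.
Local Open Scope ring_scope.
Section HahnBanach.
Variables (R : realType) (X : lmodType R) (p : X -> R).
Hypothesis p_add : forall x y, p (x + y) <= p x + p y.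
Hypothesis p_hom : forall (a : R) x, 0 < a -> p (a *: x) = a * p x.

Lemma p0 : p 0 = 0.
Proof.
have := @p_hom 2 0 (ltr0Sn R 1); rewrite scaler0 => h; lra.
Qed.

Definition graphP (G : set (X * R)) :=
  [/\ G (0, 0),
      (forall x a b, G (x, a) -> G (x, b) -> a = b),
      (forall x y a b, G (x, a) -> G (y, b) -> G (x + y, a + b)),
      (forall (l : R) x a, G (x, a) -> G (l *: x, l * a))
    & (forall x a, G (x, a) -> a <= p x)].

Lemma graph_ext (G : set (X * R)) x1 c :
  graphP G -> ~ (exists a, G (x1, a)) ->
  (forall x a, G (x, a) -> a - p (x - x1) <= c) ->
  (forall y b, G (y, b) -> c <= p (y + x1) - b) ->
  graphP [set z | exists x a t, G (x, a) /\ z = (x + t *: x1, a + t * c)].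
Proof.
move=> [G0 Gf Ga Gs Gp] nx1 clo chi; split.
- by exists 0, 0, 0; split => //; rewrite scale0r addr0 mul0r addr0.
- move=> x a b [y [a' [t [Gy [-> ->]]]]] [y' [b' [t' [Gy' [e ->]]]]].
  have [tt'|tt'] := eqVneq t t'.
    subst t'; have yy : y = y' by move/addIr: e.
    by subst y'; rewrite (Gf _ _ _ Gy Gy').
  exfalso; apply: nx1; exists ((t - t')^-1 * (b' - a')).
  have -> : x1 = (t - t')^-1 *: (y' - y).
    apply: (@scalerI _ _ (t - t')); first by rewrite subr_eq0.
    rewrite scalerA mulfV ?subr_eq0 // scale1r scalerBl.
    rewrite (_ : t *: x1 = y' + t' *: x1 - y); last by rewrite -e addrAC subrr add0r.
    by rewrite addrAC addrK.
  apply: (Gs); apply: (Ga) => //; rewrite -scaleN1r -[- a']mulN1r; exact: (Gs).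
- move=> x y a b [x' [a' [t [Gx [-> ->]]]]] [y' [b' [t' [Gy [-> ->]]]]].
  exists (x' + y'), (a' + b'), (t + t'); split; first exact: Ga.
  by congr pair; [rewrite scalerDl; rewrite addrACA|rewrite mulrDl addrACA].
- move=> l x a [x' [a' [t [Gx [-> ->]]]]].
  exists (l *: x'), (l * a'), (l * t); split; first exact: Gs.
  by congr pair; [rewrite scalerDr scalerA|rewrite mulrDr mulrA].
- move=> x a [x' [a' [t [Gx [-> ->]]]]].
  have [t0|t0|->] := ltgtP t 0; last by rewrite scale0r mul0r !addr0; exact: Gp.
  +
    set s := - t; have s0 : 0 < s by rewrite /s oppr_gt0.
    have := clo _ _ (Gs (s^-1) _ _ Gx).
    have -> : s^-1 *: x' - x1 = s^-1 *: (x' + t *: x1).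
      by rewrite scalerDr scalerA /s invrN mulNr mulVf ?lt_eqF // scaleN1r.
    rewrite p_hom ?invr_gt0 // => h.
    have : s * (s^-1 * a' - s^-1 * p (x' + t *: x1)) <= s * c by rewrite ler_pM2l.
    rewrite mulrBr !mulrA mulfV ?gt_eqF // !mul1r /s mulNr; lra.
  + have := chi _ _ (Gs (t^-1) _ _ Gx).
    have -> : t^-1 *: x' + x1 = t^-1 *: (x' + t *: x1).
      by rewrite scalerDr scalerA mulVf ?gt_eqF // scale1r.
    rewrite p_hom ?invr_gt0 // => h.
    have : t * c <= t * (t^-1 * p (x' + t *: x1) - t^-1 * a') by rewrite ler_pM2l.
    rewrite mulrBr !mulrA mulfV ?gt_eqF // !mul1r; lra.
Qed.

Lemma graph_ext_sup (G : set (X * R)) x1 :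
  graphP G -> ~ (exists a, G (x1, a)) ->
  exists G' : set (X * R), [/\ graphP G', G `<=` G' & exists a, G' (x1, a)].
Proof.
move=> GP nx1; have GP' := GP; case: GP' => [G0 Gf Ga Gs Gp].
pose S := [set u | exists x a, G (x, a) /\ u = a - p (x - x1)].
have ub : forall y b, G (y, b) -> ubound S (p (y + x1) - b).
  move=> y b Gy _ [x [a [Gx ->]]].
  have := Gp _ _ (Ga _ _ _ _ Gx Gy).
  have := p_add (x - x1) (y + x1).
  rewrite (_ : x - x1 + (y + x1) = x + y); last by rewrite addrACA addNr addr0.
  lra.
have S0 : S !=set0 by exists (0 - p (0 - x1)), 0, 0.
have hs : has_sup S by split => //; exists (p (0 + x1) - 0); exact: ub.
exists [set z | exists x a t, G (x, a) /\ z = (x + t *: x1, a + t * sup S)].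
split.
- apply: graph_ext => //.
  + by move=> x a Gx; apply: sup_upper_bound => //; exists x, a.
  + by move=> y b Gy; apply: ge_sup => //; exact: ub.
- by move=> [x a] Gx; exists x, a, 0; rewrite scale0r mul0r !addr0.
- exists (sup S), 0, 0, 1; split => //; by rewrite scale1r !add0r mul1r.
Qed.

Theorem hahn_banach x0 : exists g : X -> R,
  [/\ forall x y, g (x + y) = g x + g y,
      forall (a : R) x, g (a *: x) = a * g x,
      forall x, g x <= p x & g x0 = p x0].
Proof.
have [B [BP Bx0]] : exists B, graphP B /\ B (x0, p x0).
  have triv : graphP [set (0, 0)].
    split => //.
    - by move=> x a b [_ ->] [_ ->].
    - by move=> x y a b [-> ->] [-> ->]; rewrite !addr0.
    - by move=> l x a [-> ->]; rewrite scaler0 mulr0.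
    - by move=> x a [-> ->]; rewrite p0.
  have [->|x00] := eqVneq x0 0; first by exists [set (0, 0)]; rewrite p0.
  have nx : ~ (exists a, [set (0:X, 0:R)] (x0, a)) by move=> [a [/eqP]]; rewrite (negbTE x00).
  exists [set z | exists x a t, [set (0:X, 0:R)] (x, a) /\ z = (x + t *: x0, a + t * p x0)].
  split; last by exists 0, 0, 1; split; [exact: erefl|rewrite scale1r mul1r !add0r].
  apply: graph_ext => //.
  + move=> x a [-> ->]; have := p_add x0 (0 - x0); rewrite addrC subrK p0 add0r; lra.
  + by move=> y b [-> ->]; rewrite add0r subr0.
pose T := {G : set (X * R) | graphP G /\ B `<=` G}.
have BT : graphP B /\ B `<=` B by split.
pose Rel (G1 G2 : T) := `[< proj1_sig G1 `<=` proj1_sig G2 >].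
have [[G [GP BG]] Gmax] : exists t, premaximal Rel t.
  apply: (ZL_preorder (exist _ B BT)).
  - by move=> t; apply/asboolP.
  - by move=> r s t /asboolP rs /asboolP st; apply/asboolP; exact: subset_trans st.
  move=> A Atot.
  have [[G0 AG0]|A0] := pselect (A !=set0); last first.
    exists (exist _ B BT) => s As; exfalso; apply: A0; by exists s.
  pose U := \bigcup_(H in A) proj1_sig H.
  have mem2 : forall z1 z2, U z1 -> U z2 -> exists H, A H /\ proj1_sig H z1 /\ proj1_sig H z2.
    move=> z1 z2 [H1 A1 h1] [H2 A2 h2].
    have [/asboolP s12|/asboolP s21] := Atot _ _ A1 A2.
    + by exists H2; split => //; split => //; exact: s12.
    + by exists H1; split => //; split => //; exact: s21.
  have UP : graphP U /\ B `<=` U.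
    split; last by move=> z Bz; exists G0 => //; case: (proj2_sig G0) => _; apply.
    split.
    - by exists G0 => //; case: (proj2_sig G0) => -[].
    - move=> x a b h1 h2; have [H [_ [H1 H2]]] := mem2 _ _ h1 h2.
      by case: (proj2_sig H) => -[_ Hf _ _ _] _; exact: Hf H1 H2.
    - move=> x y a b h1 h2; have [H [AH [H1 H2]]] := mem2 _ _ h1 h2.
      exists H => //; by case: (proj2_sig H) => -[_ _ Ha _ _] _; exact: Ha H1 H2.
    - move=> l x a [H AH H1]; exists H => //.
      by case: (proj2_sig H) => -[_ _ _ Hs _] _; exact: Hs H1.
    - move=> x a [H AH H1].
      by case: (proj2_sig H) => -[_ _ _ _ Hp] _; exact: Hp H1.
  exists (exist _ U UP) => s As; apply/asboolP => z sz /=; by exists s.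
have full : forall x, exists a, G (x, a).
  move=> x1; apply: contrapT => nx1.
  have [G' [G'P GG' [a Ga]]] := @graph_ext_sup G x1 GP nx1.
  have BG' : B `<=` G' := subset_trans BG GG'.
  have /asboolP := Gmax (exist _ G' (conj G'P BG')) (asboolT GG').
  by move=> /(_ _ Ga) /= Gx; apply: nx1; exists a.
have GP2 := GP; case: GP2 => [G0 Gf Ga Gs Gp].
pose g x := xget 0 [set a | G (x, a)].
have gG : forall x, G (x, g x).
  by move=> x; rewrite /g; case: xgetP => //; have [a Ga'] := full x => /(_ a).
have gE : forall x a, G (x, a) -> g x = a by move=> x a h; exact: Gf _ _ _ (gG x) h.
exists g; split.
- by move=> x y; apply: gE; apply: Ga; exact: gG.
- by move=> a x; apply: gE; apply: Gs; exact: gG.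
- by move=> x; apply: Gp; exact: gG.
- by apply: gE; exact: (BG).
Qed.
End HahnBanach.
Section Weak.
Variables (R : realType) (X : normedModType R).

Lemma add_sub (g : X -> R) : (forall x y, g (x + y) = g x + g y) ->
  forall x y, g (x - y) = g x - g y.
Proof.
move=> ga x y; have := ga (x - y) y; rewrite subrK => ->; by rewrite addrK.
Qed.

Lemma bounded_cont (g : X -> R) K : (forall x y, g (x + y) = g x + g y) ->
  (forall y, `|g y| <= K * `|y|) -> continuous g.
Proof.
move=> ga gb x; apply/cvgrPdist_le => e e0.
have K1 : 0 < `|K| + 1 by rewrite ltr_pwDr // ?ltr01.
apply/nbhs_ballP; exists (e / (`|K| + 1)); first by rewrite /= divr_gt0.
move=> z; rewrite -ball_normE /ball_ /= => hz.
rewrite -add_sub //; apply: (le_trans (gb _)).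
have h1 : K * `|x - z| <= (`|K| + 1) * `|x - z|.
  by apply: ler_wpM2r => //; rewrite (le_trans (ler_norm K)) // lerDl.
apply: (le_trans h1).
have := hz; rewrite ltr_pdivlMr // mulrC => /ltW //.
Qed.

Lemma clf_bounded (f : X -> R) : cont_linear_functional f ->
  exists M, 0 <= M /\ forall x, `|f x| <= M * `|x|.
Proof.
case=> fa fs fc.
have f0 : f 0 = 0 by have := fs 0 0; rewrite scale0r mul0r.
have := fc 0; move/cvgrPdist_lt => /(_ 1 ltr01); rewrite f0.
move=> /nbhs_ballP [d /= d0 hd].
exists (2 / d); split; first by rewrite divr_ge0 // ltW.
move=> x; have [->|xn0] := eqVneq x 0; first by rewrite f0 !normr0 mulr0.
have nx : 0 < `|x| by rewrite normr_gt0.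
set c := d / 2 / `|x|.
have c0 : 0 < c by rewrite /c !divr_gt0.
have bl : ball (0:X) d (c *: x).
  rewrite -ball_normE /ball_ /= sub0r normrN normrZ gtr0_norm //.
  rewrite /c divfK ?gt_eqF //.
  by rewrite ltr_pdivrMr // ltr_pMr // ltr1n.
have := hd _ bl; rewrite /= sub0r normrN fs normrM gtr0_norm // => hc.
have -> : `|f x| = (2 / d * `|x|) * (c * `|f x|).
  by rewrite /c; field; rewrite ?gt_eqF.
by rewrite ler_piMr ?(ltW hc) // mulr_ge0 ?divr_ge0 // ltW.
Qed.

Lemma norming (q : X -> R) K :
  (forall x y, q (x + y) <= q x + q y) ->
  (forall (a : R) x, 0 < a -> q (a *: x) = a * q x) ->
  (forall y, q y <= K * `|y|) ->
  forall x, exists g, [/\ cont_linear_functional g, g x = q x &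
                          forall y, g y <= q y].
Proof.
move=> qa qh qb x.
have [g [ga gs gq gx]] := @hahn_banach R X q qa qh x.
exists g; split => //; split => //.
apply: (@bounded_cont g `|K|) => // y.
rewrite ler_norml; apply/andP; split.
- have := gq (- y); rewrite -scaleN1r gs mulN1r scaleN1r => h.
  have := qb (- y); rewrite normrN => h2.
  have h3 : K * `|y| <= `|K| * `|y| by rewrite ler_wpM2r // ler_norm.
  rewrite lerNl; exact: le_trans h (le_trans h2 h3).
- apply: le_trans (gq y) (le_trans (qb y) _).
  by rewrite ler_wpM2r // ler_norm.
Qed.

Lemma norm_sub1 : forall x y : X, `|x + y| <= `|x| + `|y|.
Proof. exact: ler_normD. Qed.
Lemma norm_hom : forall (a : R) (x : X), 0 < a -> `|a *: x| = a * `|x|.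
Proof. by move=> a x a0; rewrite normrZ gtr0_norm. Qed.

Lemma norm_b1 : forall y : X, `|y| <= 1 * `|y|.
Proof. by move=> y; rewrite mul1r. Qed.

Lemma weak_eq (x y : X) : (forall f, cont_linear_functional f -> f x = f y) -> x = y.
Proof.
move=> h; have [g [cg gx _]] := @norming (fun z => `|z|) 1 norm_sub1 norm_hom
  norm_b1 (x - y).
case: (cg) => ga _ _; move: gx; rewrite add_sub // h // subrr => /esym /eqP.
by rewrite normr_eq0 subr_eq0 => /eqP.
Qed.

Lemma ulim_ex (I : Type) (U : set_system I) (UU : UltraFilter U) (a : I -> R) M :
  (forall i, `|a i| <= M) -> exists l : R, a i @[i --> U] --> l.
Proof.
move=> aM.
have FA : U (a @^-1` `[- M, M]%classic).
  by apply: filterE => i /=; rewrite in_itv /= -ler_norml.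
have [p [_ clp]] := @segment_compact R (- M) M (fmap a U) _ FA.
exists p => V Vp.
have [//|h] := in_ultra_setVsetC (a @^-1` V) UU.
exfalso.
have FV : (fmap a U) (~` V) by rewrite /= preimage_setC in h; exact: h.
have [t [nVt Vt]] := clp _ _ FV Vp.
exact: nVt Vt.
Qed.

Lemma wlim_le (q : X -> R) K :
  (forall x y, q (x + y) <= q x + q y) ->
  (forall (a : R) x, 0 < a -> q (a *: x) = a * q x) ->
  (forall y, q y <= K * `|y|) ->
  forall (I : Type) (U : set_system I) (UU : ProperFilter U) (z : I -> X) x B,
  (forall f, cont_linear_functional f -> f (z i) @[i --> U] --> f x) ->
  (\forall i \near U, q (z i) <= B) -> q x <= B.
Proof.
move=> qa qh qb I U UU z x B hz hB.
have [g [cg gx gq]] := @norming q K qa qh qb x.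
rewrite -gx; apply: (@closed_cvg _ _ U _ (fun i => g (z i)) (fun t => t <= B)).
- exact: closed_le.
- by apply: filterS hB => i /= h; exact: le_trans (gq _) h.
- exact: hz.
Qed.

Lemma wlim_uniq (I : Type) (U : set_system I) (UU : ProperFilter U) (z : I -> X) x y :
  (forall f, cont_linear_functional f -> f (z i) @[i --> U] --> f x) ->
  (forall f, cont_linear_functional f -> f (z i) @[i --> U] --> f y) -> x = y.
Proof.
move=> hx hy; apply: weak_eq => f cf.
exact: (cvg_unique _ (hx f cf) (hy f cf)).
Qed.

Lemma wlim_cst (I : Type) (U : set_system I) (UU : ProperFilter U) (z : I -> X) x c :
  (forall i, z i = c) ->
  (forall f, cont_linear_functional f -> f (z i) @[i --> U] --> f x) -> x = c.
Proof.
move=> zc hx; apply: (@wlim_uniq I U UU z x c hx) => f cf.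
have -> : (fun i => f (z i)) = fun _ => f c by apply: funext => i; rewrite zc.
exact: cvg_cst.
Qed.

Lemma wlim_ex (hrefl : reflexive_space X) (I : Type) (U : set_system I)
  (UU : UltraFilter U) (z : I -> X) r :
  (forall i, `|z i| <= r) ->
  exists x, forall f, cont_linear_functional f -> f (z i) @[i --> U] --> f x.
Proof.
move=> zr.
have [[x0 x0n]|triv] := pselect (exists x0 : X, x0 != 0); last first.
  have z0 : forall i, z i = 0.
    move=> i; apply: contrapT => /eqP h; apply: triv; by exists (z i).
  exists 0 => f cf.
  have -> : (fun i => f (z i)) = fun _ => f 0 by apply: funext => i; rewrite z0.
  exact: cvg_cst.
pose Phi (f : X -> R) := lim (f (z i) @[i --> U]).
have cv : forall f, cont_linear_functional f -> f (z i) @[i --> U] --> Phi f.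
  move=> f cf; have [M [M0 hM]] := @clf_bounded f cf.
  have [l hl] := @ulim_ex I U UU (fun i => f (z i)) (M * r)
    (fun i => le_trans (hM (z i)) (ler_wpM2l M0 (zr i))).
  by rewrite /Phi (cvg_lim _ hl).
have [x hx] : exists x : X, forall f, cont_linear_functional f -> Phi f = f x.
  apply: hrefl.
  - move=> f g cf cg; rewrite /Phi; apply: cvg_lim => //.
    exact: (cvgD (cv f cf) (cv g cg)).
  - move=> a f cf; rewrite /Phi; apply: cvg_lim => //.
    exact: (cvgMr (cv f cf)).
  - exists r => f M cf hM.
    have M0 : 0 <= M.
      have := hM x0; have := normr_gt0 x0; rewrite x0n => /= nx h.
      by rewrite -(pmulr_lge0 _ nx) (le_trans _ h).
    have hb : forall i, `|f (z i)| <= r * M.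
      by move=> i; rewrite mulrC; apply: le_trans (hM _) (ler_wpM2l M0 (zr i)).
    rewrite ler_norml; apply/andP; split.
    + apply: (@closed_cvg _ _ U _ (fun i => f (z i)) (fun t => - (r * M) <= t)).
      * exact: closed_ge.
      * by apply: filterE => i /=; have := hb i; rewrite ler_norml => /andP[].
      * exact: cv.
    + apply: (@closed_cvg _ _ U _ (fun i => f (z i)) (fun t => t <= r * M)).
      * exact: closed_le.
      * by apply: filterE => i /=; have := hb i; rewrite ler_norml => /andP[].
      * exact: cv.
exists x => f cf; rewrite -hx //; exact: cv.
Qed.

End Weak.
Section Separation.
Variables (R : realType) (X : normedModType R).

Lemma conv_comb (C : set X) : convex_set (C : set (convex_lmodType X)) ->
  forall a b (l : R), C a -> C b -> 0 <= l -> l <= 1 -> C (l *: a + (1 - l) *: b).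
Proof.
move=> hC a b l Ca Cb l0 l1.
have := hC a b (Itv01 l0 l1); rewrite !in_setE => /(_ Ca Cb); exact.
Qed.

Variables (K : set X) (r : R).
Hypothesis r0 : 0 < r.
Hypothesis Kball : forall w : X, `|w| < r -> K w.
Hypothesis Kconv : forall a b (l : R), K a -> K b -> 0 <= l -> l <= 1 -> K (l *: a + (1 - l) *: b).

Definition gS (w : X) := [set t : R | 0 < t /\ K (t^-1 *: w)].
Definition gauge (w : X) := inf (gS w).

Lemma K0 : K 0. Proof. by apply: Kball; rewrite normr0. Qed.

Lemma gS_up w t t' : gS w t -> t <= t' -> gS w t'.
Proof.
move=> [t0 Kt] tt'; have t'0 : 0 < t' := lt_le_trans t0 tt'.
split => //.
have := Kconv _ _ (t / t') Kt K0; rewrite scaler0 addr0 scalerA.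
have -> : t / t' * t^-1 = t'^-1 by field; rewrite ?gt_eqF.
apply; first by rewrite divr_ge0 ?ltW.
by rewrite ler_pdivrMr // mul1r.
Qed.

Lemma gS_big w t : 0 < t -> 2 * `|w| / r <= t -> gS w t.
Proof.
move=> t0 ht; split => //; apply: Kball.
rewrite normrZ gtr0_norm ?invr_gt0 //.
rewrite ler_pdivrMr // in ht.
rewrite -ltr_pdivlMl ?invr_gt0 // invrK.
have : 0 < r * t by rewrite mulr_gt0.
have := normr_ge0 w; nra.
Qed.

Lemma gS_ne w : gS w !=set0.
Proof.
exists (2 * `|w| / r + 1); apply: gS_big; last by rewrite lerDl.
by rewrite ltr_wpDl // ?ltr01 // divr_ge0 // ?mulr_ge0 // ltW.
Qed.

Lemma gS_lb w : has_lbound (gS w).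
Proof. by exists 0 => t [t0 _]; exact: ltW. Qed.

Lemma gauge_le w t : gS w t -> gauge w <= t.
Proof. by move=> h; apply: ge_inf => //; exact: gS_lb. Qed.

Lemma gauge_lt w t : gauge w < t -> gS w t.
Proof.
move=> h; have [t' St' t't] := inf_lt (gS_ne w) h.
by apply: gS_up St' _; exact: ltW.
Qed.

Lemma gauge_ge0 w : 0 <= gauge w.
Proof. by apply: lb_le_inf; [exact: gS_ne | move=> t [t0 _]; exact: ltW]. Qed.

Lemma gauge_bound w : gauge w <= (2 / r) * `|w|.
Proof.
apply/ler_addgt0Pr => e e0; apply: gauge_le; apply: gS_big.
  by rewrite ltr_wpDl // mulr_ge0 // divr_ge0 // ltW.
by rewrite mulrAC lerDl ltW.
Qed.

Lemma gauge_add z w : gauge (z + w) <= gauge z + gauge w.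
Proof.
apply/ler_addgt0Pr => e e0.
have e2 : 0 < e / 2 by rewrite divr_gt0.
have [s0 Ks] := @gauge_lt z _ (ltr_pwDr e2 (lexx (gauge z))).
have [t0 Kt] := @gauge_lt w _ (ltr_pwDr e2 (lexx (gauge w))).
set s := gauge z + e / 2 in s0 Ks *; set t := gauge w + e / 2 in t0 Kt *.
have st0 : 0 < s + t by rewrite addr_gt0.
have -> : gauge z + gauge w + e = s + t by rewrite /s /t; field.
apply: gauge_le; split => //.
have := Kconv _ _ (s / (s + t)) Ks Kt.
have -> : s / (s + t) *: (s^-1 *: z) + (1 - s / (s + t)) *: (t^-1 *: w) = (s + t)^-1 *: (z + w).
  rewrite !scalerA scalerDr; congr (_ *: _ + _ *: _); field; rewrite ?gt_eqF //.
apply; first by rewrite divr_ge0 // ltW.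
by rewrite ler_pdivrMr // mul1r lerDl ltW.
Qed.

Lemma gauge_hom_le (a : R) w : 0 < a -> gauge (a *: w) <= a * gauge w.
Proof.
move=> a0; apply/ler_addgt0Pr => e e0.
have ea : 0 < e / a by rewrite divr_gt0.
have [t0 Kt] := @gauge_lt w _ (ltr_pwDr ea (lexx (gauge w))).
have -> : a * gauge w + e = a * (gauge w + e / a) by field; rewrite gt_eqF.
apply: gauge_le; split; first by rewrite mulr_gt0.
rewrite scalerA.
have -> : (a * (gauge w + e / a))^-1 * a = (gauge w + e / a)^-1.
  have hpos : gauge w * a + e != 0.
    by rewrite gt_eqF // ltr_wpDl // mulr_ge0 ?gauge_ge0 // ltW.
  by field; apply/andP; split; [rewrite gt_eqF | exact: hpos].
by move: Kt.
Qed.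

Lemma gauge_hom (a : R) w : 0 < a -> gauge (a *: w) = a * gauge w.
Proof.
move=> a0; apply/eqP; rewrite eq_le gauge_hom_le //=.
have := @gauge_hom_le (a^-1) (a *: w); rewrite invr_gt0 scalerA mulVf ?gt_eqF //.
rewrite scale1r => /(_ a0) h.
have ai : 0 < a^-1 by rewrite invr_gt0.
by rewrite -(ler_pM2l ai) mulrA mulVf ?gt_eqF // mul1r.
Qed.

Lemma gauge_in w : K w -> gauge w <= 1.
Proof. by move=> Kw; apply: gauge_le; split; rewrite ?ltr01 // invr1 scale1r. Qed.

Lemma gauge_lt1 w : gauge w < 1 -> K w.
Proof. by move=> /gauge_lt [_]; rewrite invr1 scale1r. Qed.

End Separation.
Section WeakClosed.
Variables (R : realType) (X : normedModType R).

Definition comb (l : R) (x y : X) := l *: x + (1 - l) *: y.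

Lemma combD l x y x' y' : comb l (x + x') (y + y') = comb l x y + comb l x' y'.
Proof. by rewrite /comb !scalerDr addrACA. Qed.

Lemma combvv l v : comb l v v = v.
Proof. by rewrite /comb -scalerDl addrC subrK scale1r. Qed.

Lemma comb_norm l (u1 u2 : X) D : 0 <= l -> l <= 1 -> `|u1| < D -> `|u2| < D ->
  `|comb l u1 u2| < D.
Proof.
move=> l0 l1 h1 h2; rewrite /comb.
apply: le_lt_trans (ler_normD _ _) _.
rewrite !normrZ (ger0_norm l0) ger0_norm ?subr_ge0 //.
have l1' : 0 <= 1 - l by rewrite subr_ge0.
have [h12|h21] := lerP `|u1| `|u2|.
- have : l * `|u1| <= l * `|u2| by rewrite ler_wpM2l.
  lra.
- have : (1 - l) * `|u2| <= (1 - l) * `|u1| by rewrite ler_wpM2l // ltW.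
  lra.
Qed.

Lemma wlim_in (C : set X) : convex_set (C : set (convex_lmodType X)) ->
  (forall y, ~ C y -> exists d, 0 < d /\ forall c, C c -> d <= `|c - y|) ->
  forall (I : Type) (U : set_system I) (UU : ProperFilter U) (z : I -> X) x,
  (forall f, cont_linear_functional f -> f (z i) @[i --> U] --> f x) ->
  (\forall i \near U, C (z i)) -> C x.
Proof.
move=> hC hcl I U UU z x hz hn; apply: contrapT => nCx.
have [d [d0 hd]] := hcl x nCx.
have [i0 Ci0] := filter_ex hn; set c0 := z i0 in Ci0.
pose K := [set w | exists c u, [/\ C c, `|u| < d / 2 & w = c + - c0 + u]].
have r0 : 0 < d / 2 by rewrite divr_gt0.
have Kball : forall w : X, `|w| < d / 2 -> K w.
  by move=> w hw; exists c0, w; split => //; rewrite subrr add0r.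
have Kconv : forall a b (l : R), K a -> K b -> 0 <= l -> l <= 1 ->
    K (l *: a + (1 - l) *: b).
  move=> a b l [c1 [u1 [C1 hu1 ->]]] [c2 [u2 [C2 hu2 ->]]] l0 l1.
  exists (comb l c1 c2), (comb l u1 u2); split.
  - exact: conv_comb.
  - exact: comb_norm.
  - by rewrite -[l *: _ + _]/(comb l _ _) !combD combvv.
pose q := @gauge R X K.
have qa : forall x y, q (x + y) <= q x + q y := @gauge_add R X K (d / 2) r0 Kball Kconv.
have qh : forall (a : R) x, 0 < a -> q (a *: x) = a * q x := @gauge_hom R X K (d / 2) r0 Kball Kconv.
have qb : forall y, q y <= (2 / (d / 2)) * `|y| := @gauge_bound R X K (d / 2) r0 Kball.
set w0 := x - c0.
have [g [cg gw0 gq]] := @norming R X q _ qa qh qb w0.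
case: (cg) => ga gs _.
have q1 : 1 <= q w0.
  rewrite leNgt; apply/negP => /(@gauge_lt1 R X K (d / 2) r0 Kball Kconv) [c [u [Cc hu]]].
  rewrite /w0 => e.
  have ex : x = c + u by rewrite -(subrK c0 x) e addrAC subrK.
  have := hd _ Cc; rewrite ex opprD addrA subrr add0r normrN.
  have : d / 2 < d by rewrite ltr_pdivrMr // ltr_pMr // ltr1n.
  lra.
set eps := d / (4 * (`|w0| + 1)).
have n1 : 0 < `|w0| + 1 by rewrite ltr_wpDl.
have e0 : 0 < eps by rewrite divr_gt0 // mulr_gt0.
have hsmall : `|eps *: w0| < d / 2.
  rewrite normrZ gtr0_norm // /eps.
  have -> : d / (4 * (`|w0| + 1)) * `|w0| = d / 4 * (`|w0| / (`|w0| + 1)).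
    by field; rewrite gt_eqF.
  have : `|w0| / (`|w0| + 1) < 1 by rewrite ltr_pdivrMr // mul1r ltrDl.
  have : 0 <= `|w0| / (`|w0| + 1) by rewrite divr_ge0 // ltW.
  nra.
have sepC : forall c, C c -> g c <= g c0 + 1 - eps.
  move=> c Cc.
  have Kc : K (c - c0 + eps *: w0) by exists c, (eps *: w0); split.
  have h2 := gq (c - c0 + eps *: w0).
  have h1 := @gauge_in R X K _ Kc.
  have := le_trans h2 h1; rewrite ga gs add_sub // gw0.
  have : 0 <= eps * (q w0 - 1) by apply: mulr_ge0; [exact: ltW | rewrite subr_ge0].
  nra.
have : g x <= g c0 + 1 - eps.
  apply: (@closed_cvg _ _ U _ (fun i => g (z i)) (fun t => t <= g c0 + 1 - eps)).
  - exact: closed_le.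
  - by apply: filterS hn => i; exact: sepC.
  - exact: hz.
have : g x - g c0 = q w0 by rewrite -add_sub.
lra.
Qed.

End WeakClosed.
Section Bruck.
Variables (R : realType) (X : normedModType R).
Hypothesis hrefl : reflexive_space X.
Variables (q : X -> R) (K K' : R).
Hypothesis hq : is_norm q.
Hypothesis hsc : strictly_convex_norm q.
Hypothesis qK : forall y, q y <= K * `|y|.
Hypothesis Kq : forall y, `|y| <= K' * q y.
Hypothesis K'0 : 0 <= K'.

Lemma q_add x y : q (x + y) <= q x + q y.
Proof. by case: hq. Qed.
Lemma q_hom (a : R) x : 0 < a -> q (a *: x) = a * q x.
Proof. by case: hq => _ _ h _ a0; rewrite h gtr0_norm. Qed.
Lemma q_ge0 x : 0 <= q x.
Proof. by case: hq. Qed.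
Lemma q_eq0 x : q x = 0 -> x = 0.
Proof. by case: hq => _ h _ _; exact: h. Qed.
Lemma q_Z (a : R) x : q (a *: x) = `|a| * q x.
Proof. by case: hq. Qed.

Lemma half_gt0 : 0 < 2^-1 :> R.
Proof. by rewrite invr_gt0 ltr0Sn. Qed.

Lemma sc_eq a b : q b <= q a -> q a <= q (2^-1 *: (a + b)) -> a = b.
Proof.
move=> hba hab.
have hmid : q (2^-1 *: (a + b)) <= 2^-1 * (q a + q b).
  rewrite q_hom ?half_gt0 //; apply: ler_wpM2l; [exact: ltW half_gt0 | exact: q_add].
have qb : q b = q a by apply/eqP; rewrite eq_le hba /=; lra.
have [ra|ra] := eqVneq (q a) 0.
  by rewrite (@q_eq0 a ra) (@q_eq0 b (etrans qb ra)).
have r0 : 0 < q a by rewrite lt_neqAle eq_sym ra q_ge0.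
apply: contrapT => nab.
have h1 : q ((q a)^-1 *: a) = 1 by rewrite q_hom ?invr_gt0 // mulVf.
have h2 : q ((q a)^-1 *: b) = 1 by rewrite q_hom ?invr_gt0 // qb mulVf.
have h3 : (q a)^-1 *: a <> (q a)^-1 *: b.
  by move=> /scalerI => /(_ (invr_neq0 ra)).
have H : q (2^-1 *: ((q a)^-1 *: a + (q a)^-1 *: b)) < 1 := hsc _ _ h1 h2 h3.
move: H.
have T1 : forall (u v : R) (w : X), u *: (v *: w) = (u * v) *: w.
  by move=> u v w; rewrite scalerA.
have T2 : forall (u : R) (w w' : X), u *: (w + w') = u *: w + u *: w'.
  by move=> u w w'; rewrite scalerDr.
have qh : forall (u : R) (w : X), 0 < u -> q (u *: w) = u * q w.
  by move=> u w; exact: q_hom.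
have -> : 2^-1 *: ((q a)^-1 *: a + (q a)^-1 *: b) = (q a)^-1 *: (2^-1 *: (a + b)).
  by rewrite !T2 !T1 (mulrC 2^-1).
rewrite qh ?invr_gt0 //.
have hq0 : q (2^-1 *: (a + b)) = q a.
  by apply/eqP; rewrite eq_le hab andbT; lra.
rewrite hq0 mulVf //; lra.
Qed.

Lemma scA (u v : R) (w : X) : u *: (v *: w) = (u * v) *: w.
Proof. exact: scalerA. Qed.
Lemma scDl (u v : R) (w : X) : (u + v) *: w = u *: w + v *: w.
Proof. exact: scalerDl. Qed.
Lemma scDr (u : R) (w w' : X) : u *: (w + w') = u *: w + u *: w'.
Proof. exact: scalerDr. Qed.
Lemma scBr (u : R) (w w' : X) : u *: (w - w') = u *: w - u *: w'.
Proof. exact: scalerBr. Qed.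
Lemma sc1 (w : X) : (1 : R) *: w = w.
Proof. exact: scale1r. Qed.

Lemma half_id (v : X) : 2^-1 *: (v + v) = v.
Proof.
have h2 : (2^-1 : R) * (1 + 1) = 1 by field.
by rewrite -{1 2}[v]sc1 -scDl scA h2 sc1.
Qed.

Lemma half_sub (a b c d : X) :
  2^-1 *: (a + b) - 2^-1 *: (c + d) = 2^-1 *: ((a - c) + (b - d)).
Proof. by rewrite -scBr opprD addrACA. Qed.

Variables (F : nat -> set X) (P : nat -> X -> X).
Hypothesis PF : forall k x, F k (P k x).
Hypothesis Pid : forall k x, F k x -> P k x = x.
Hypothesis Pq : forall k x y, q (P k x - P k y) <= q (x - y).
Variable p0 : X.
Hypothesis Fp0 : forall k, F k p0.

Definition Fi x := forall k, F k x.
Definition goodmap (f : X -> X) :=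
  (forall p, Fi p -> f p = p) /\ (forall x y, q (f x - f y) <= q (x - y)).

Lemma bruck : exists f : X -> X, [/\ forall x, Fi (f x),
  forall x, Fi x -> f x = x & forall x y, q (f x - f y) <= q (x - y)].
Proof.
pose T := {f : X -> X | goodmap f}.
have idg : goodmap id by split.
pose Rel (f g : T) := `[< forall x y, q (sval g x - sval g y) <= q (sval f x - sval f y) >].
have [[f [fF fq]] fmax] : exists t, premaximal Rel t.
  apply: (ZL_preorder (exist _ id idg)).
  - by move=> t; apply/asboolP.
  - move=> r s t /asboolP rs /asboolP st; apply/asboolP => x y.
    exact: le_trans (st x y) (rs x y).
  move=> A Atot.
  have [[a0 Aa0]|A0] := pselect (A !=set0); last first.
    by exists (exist _ id idg) => s As; exfalso; apply: A0; exists s.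
  pose B (a : T) := [set s : T | A s /\ Rel a s].
  have BF : Filter (filter_from A B).
    apply: filter_from_filter; first by exists a0.
    move=> a1 a2 A1 A2; have [r12|r21] := Atot _ _ A1 A2.
    + exists a2 => // s [As r2s]; split; split => //.
      move/asboolP: r12 => r12; move/asboolP: r2s => r2s.
      by apply/asboolP => x y; exact: le_trans (r2s x y) (r12 x y).
    + exists a1 => // s [As r1s]; split; split => //.
      move/asboolP: r21 => r21; move/asboolP: r1s => r1s.
      by apply/asboolP => x y; exact: le_trans (r1s x y) (r21 x y).
  have BP : ProperFilter (filter_from A B).
    apply: filter_from_proper => a Aa; exists a; split => //; exact/asboolP.
  have [U [UU sBU]] := ultraFilterLemma BP.
  have bnd : forall x (s : T), `|sval s x| <= `|p0| + K' * q (x - p0).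
    move=> x [s [sF sq]] /=.
    have sp : s p0 = p0 by apply: sF.
    have := sq x p0; rewrite sp => h.
    have := Kq (s x - p0); have := ler_normD (s x - p0) p0; rewrite subrK.
    have := ler_wpM2l K'0 h; lra.
  have wl : forall x, exists y, forall g, cont_linear_functional g ->
      g (sval s x) @[s --> U] --> g y.
    by move=> x; exact: (@wlim_ex R X hrefl T U UU (fun s => sval s x) _ (fun s => bnd x s)).
  have [fs hfs] := choice wl.
  have hd : forall x y g, cont_linear_functional g ->
      g (sval s x - sval s y) @[s --> U] --> g (fs x - fs y).
    move=> x y g cg; have [ga _ _] := cg.
    rewrite add_sub //.
    have -> : (fun s : T => g (sval s x - sval s y)) =
              (fun s => g (sval s x)) - (fun s => g (sval s y)).
      by apply: funext => s /=; rewrite add_sub.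
    exact: (cvgB (hfs x g cg) (hfs y g cg)).
  have fsg : goodmap fs.
    split.
    - move=> p Fp; apply: (@wlim_cst R X T U _ (fun s => sval s p) (fs p) p _ (hfs p)).
      by move=> [s [sF sq]] /=; exact: sF.
    - move=> x y; apply: (@wlim_le R X q K q_add q_hom qK T U _
        (fun s => sval s x - sval s y) (fs x - fs y) (q (x - y)) (hd x y)).
      by apply: filterE => -[s [sF sq]]; exact: sq.
  exists (exist _ fs fsg) => a Aa; apply/asboolP => x y /=.
  apply: (@wlim_le R X q K q_add q_hom qK T U _
        (fun s => sval s x - sval s y) (fs x - fs y) _ (hd x y)).
  apply: sBU; exists a => // s [_ /asboolP h]; exact: h x y.
have qh : forall (u : R) (w : X), 0 < u -> q (u *: w) = u * q w.
  by move=> u w; exact: q_hom.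
have Fp0' : Fi p0 by [].
exists f; split => //.
move=> x k.
pose h := fun z => 2^-1 *: (f z + P k (f z)).
have hle : forall u v, q (h u - h v) <= q (f u - f v).
  move=> u v; rewrite /h half_sub qh ?half_gt0 //.
  have := q_add (f u - f v) (P k (f u) - P k (f v)); have := Pq k (f u) (f v).
  lra.
have hg : goodmap h.
  split.
  - move=> p Fp; rewrite /h (fF _ Fp) Pid ?half_id //; exact: Fp k.
  - by move=> u v; apply: le_trans (hle u v) (fq u v).
have rel : Rel (exist _ f (conj fF fq)) (exist _ h hg).
  by apply/asboolP => u v /=; exact: hle.
have := fmax _ rel => /asboolP /(_ x p0) /=.
have fp0 : f p0 = p0 by apply: (fF).
have Pp0 : P k p0 = p0 by apply: Pid.
have -> : h x - h p0 = 2^-1 *: ((f x - p0) + (P k (f x) - p0)).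
  by rewrite /h fp0 Pp0 half_sub.
rewrite fp0 => hq1.
have hq2 : q (P k (f x) - p0) <= q (f x - p0) by rewrite -{1}Pp0 Pq.
have := @sc_eq _ _ hq2 hq1 => /addIr ->; exact: PF.
Qed.
End Bruck.
Theorem theorem17 (R : realType) (X : completeNormedModType R)
  (hrefl : reflexive_space X)
  (N : nat -> X -> R)
  (hN : forall n, is_norm (N n))
  (hsc : forall n, strictly_convex_norm (N n))
  (s : nat -> R)
  (hs0 : forall n, 0 <= s n)
  (hs : s @ \oo --> 0)
  (hequiv : forall n (x : X),
     (1 - s n) * N n x <= `|x| /\ `|x| <= (1 + s n) * N n x)
  (F : nat -> set X)
  (hconv : forall k, convex_set (F k : set (convex_lmodType X)))
  (hcontr : forall k n, contractive (N n) (F k))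
  (hne : \bigcap_k F k !=set0) :
  contractive (fun x : X => `|x|) (\bigcap_k F k).
Proof.
have bigP : forall x, (\bigcap_k F k) x <-> forall k, F k x.
  by move=> x; split => [h k|h k _]; [exact: h|exact: h].
have [p0 /bigP Fp0] := hne.
have Nge0 : forall n x, 0 <= N n x by move=> n x; case: (hN n).
have NK : forall n, s n <= 2^-1 -> forall y, N n y <= 2 * `|y|.
  move=> n gn y; have [h1 _] := hequiv n y.
  have : 0 <= (1 - 2 * s n) * N n y.
    by apply: mulr_ge0 => //; rewrite subr_ge0; lra.
  nra.
have KN : forall n, s n <= 2^-1 -> forall y, `|y| <= 2 * N n y.
  move=> n gn y; have [_ h2] := hequiv n y.
  have : 0 <= (1 - s n) * N n y.
    by apply: mulr_ge0 => //; rewrite subr_ge0; lra.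
  nra.
have h1 : forall n, exists Q : nat -> X -> X, forall k,
    [/\ forall x, F k (Q k x), forall x, F k x -> Q k x = x
      & forall x y, N n (Q k x - Q k y) <= N n (x - y)].
  move=> n; have [Q hQ] := choice (fun k => proj2 (hcontr k n)); by exists Q.
have [PP hPP] := choice h1.
have hR : forall n, exists f : X -> X,
    (s n <= 2^-1 -> [/\ forall x k, F k (f x), forall x, (forall k, F k x) -> f x = x
      & forall x y, N n (f x - f y) <= N n (x - y)]) /\
    (~~ (s n <= 2^-1) -> forall x, f x = x).
  move=> n; case: (boolP (s n <= 2^-1)) => gn; last by exists id.
  have PF : forall k x, F k (PP n k x) by move=> k x; case: (hPP n k) => + _ _; apply.
  have Pid : forall k x, F k x -> PP n k x = x by move=> k x; case: (hPP n k) => _ + _; apply.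
  have Pq : forall k x y, N n (PP n k x - PP n k y) <= N n (x - y).
    by move=> k x y; case: (hPP n k) => _ _; apply.
  have [f [fF ffix fN]] := @bruck R X hrefl (N n) 2 2 (hN n) (hsc n) (NK n gn)
    (KN n gn) (ler0n _ 2) F (PP n) PF Pid Pq p0 Fp0.
  by exists f; split.
have [RR hRR] := choice hR.
have fix_all : forall n p, (forall k, F k p) -> RR n p = p.
  move=> n p Fp; have [h1' h2'] := hRR n.
  by case: (boolP (s n <= 2^-1)) => gn; [case: (h1' gn) => _ ->|rewrite h2'].
have bnd : forall x n, `|RR n x| <= `|p0| + 4 * `|x - p0| + `|x|.
  move=> x n; have [h1' h2'] := hRR n.
  case: (boolP (s n <= 2^-1)) => gn; last first.
    by rewrite h2' // lerDr addr_ge0 // mulr_ge0.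
  have [_ _ fN] := h1' gn.
  have := fN x p0; rewrite (fix_all n p0 Fp0) => hN1.
  have := KN n gn (RR n x - p0); have := NK n gn (x - p0).
  have := ler_normD (RR n x - p0) p0; rewrite subrK.
  have := normr_ge0 x; lra.
have [U [UU sU]] := @ultraFilterLemma nat \oo _.
have ev : forall e, 0 < e -> U [set n | s n <= e].
  move=> e e0; apply: sU; move: hs => /cvgrPdist_le /(_ e e0).
  by apply: filterS => n /=; rewrite sub0r normrN ger0_norm.
have evg : U [set n | s n <= 2^-1] by apply: ev; rewrite invr_gt0 ltr0Sn.
have wl : forall x, exists y, forall g, cont_linear_functional g ->
    g (RR n x) @[n --> U] --> g y.
  by move=> x; exact: (@wlim_ex R X hrefl nat U UU (fun n => RR n x) _ (bnd x)).
have [Rf hRf] := choice wl.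
have hd : forall x y g, cont_linear_functional g ->
    g (RR n x - RR n y) @[n --> U] --> g (Rf x - Rf y).
  move=> x y g cg; have [ga _ _] := cg.
  rewrite add_sub //.
  have -> : (fun n => g (RR n x - RR n y)) =
            (fun n => g (RR n x)) - (fun n => g (RR n y)).
    by apply: funext => n /=; rewrite add_sub.
  exact: (cvgB (hRf x g cg) (hRf y g cg)).
split; first exact: hne.
exists Rf; split.
- move=> x; apply/bigP => k.
  apply: (@wlim_in R X (F k) (hconv k) _ nat U _ (fun n => RR n x) (Rf x) (hRf x)).
  + move=> y nFy.
    have [n1 gn1] := filter_ex evg.
    have [Q1 Q2 Q3] := hPP n1 k.
    set d := `|PP n1 k y - y|.
    have d0 : 0 < d.
      rewrite normr_gt0 subr_eq0; apply/eqP => e; apply: nFy; rewrite -e; exact: Q1.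
    exists (d / 5); split; first by rewrite divr_gt0.
    move=> c Fc.
    have hc : `|PP n1 k y - c| <= 4 * `|y - c|.
      have := KN n1 gn1 (PP n1 k y - PP n1 k c); rewrite (Q2 c Fc).
      have := Q3 y c; rewrite (Q2 c Fc) => hh.
      have := NK n1 gn1 (y - c); lra.
    have := ler_normD (PP n1 k y - c) (c - y).
    rewrite addrA subrK -/d (distrC c y).
    rewrite ler_pdivrMr //; lra.
  + apply: filterS evg => n gn; have [h1' _] := hRR n.
    by case: (h1' gn) => + _ _; apply.
- move=> p /bigP Fp; apply: (@wlim_cst R X nat U _ (fun n => RR n p) (Rf p) p _ (hRf p)).
  by move=> n; exact: fix_all.
- move=> x y; apply/ler_addgt0Pr => e e0.
  have dpos : 0 < 4 * (`|x - y| + 1) by rewrite mulr_gt0 // ltr_wpDl.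
  have ed : 0 < e / (4 * (`|x - y| + 1)) by rewrite divr_gt0.
  apply: (@wlim_le R X (fun z => `|z|) 1 (@norm_sub1 R X) (@norm_hom R X) (@norm_b1 R X)
    nat U _ (fun n => RR n x - RR n y) (Rf x - Rf y) _ (hd x y)).
  apply: filterS (filterI evg (ev _ ed)) => n [gn sn] /=.
  have [h1' _] := hRR n; have [_ _ fN] := h1' gn.
  have hA := (hequiv n (RR n x - RR n y)).2.
  have hB := (hequiv n (x - y)).1.
  have hC := fN x y.
  have hs' := hs0 n.
  have gn' : s n <= 2^-1 := gn.
  have sn' : s n <= e / (4 * (`|x - y| + 1)) := sn.
  have hq : 0 <= s n * (2^-1 - s n) by apply: mulr_ge0 => //; rewrite subr_ge0.
  have hD : s n * (4 * (`|x - y| + 1)) <= e by rewrite -ler_pdivlMr.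
  have p1 : 0 <= (2 * s n - 4 * s n ^+ 2) * N n (x - y).
    apply: mulr_ge0 => //; rewrite subr_ge0 expr2; lra.
  have p2 : (1 + s n) * N n (RR n x - RR n y) <= (1 + s n) * N n (x - y).
    by rewrite ler_wpM2l // addr_ge0.
  have p3 : (1 + 4 * s n) * ((1 - s n) * N n (x - y)) <= (1 + 4 * s n) * `|x - y|.
    by rewrite ler_wpM2l // addr_ge0 // mulr_ge0.
  have := normr_ge0 (x - y).
  nra.
Qed.
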